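(* In the Hex plane, the p-area of every parallelogram equals base $\times$ height, where the base is the Hex-norm length of one side and the height is the Hex distance between the line containing that side and the line containing the opposite side.
   Context: Let $u_0=(1,0)$, $u_1=(-1/2,\sqrt3/2)$, $u_2=-u_0-u_1$, and let $H$ be the convex hull of $\{\pm u_0,\pm u_1,\pm u_2\}$. The Hex plane is $\mathbb R^2$ with the norm whose unit ball is $H$ and the induced metric. The p-area of a 2-dimensional normed space is $K^{-1}\lambda$ where $\lambda$ is Lebesgue measure from an inner product and $K$ is the supremum of $\lambda$-areas of parallelograms spanned by two vectors of norm $\le1$. *)

(* Defs.v *)
From HB Require Import structures.
From mathcomp Require Import all_boot all_order all_algebra.
From mathcomp Require Import classical_sets reals.
Set Implicit Arguments. Unset Strict Implicit. Unset Printing Implicit Defensive.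
Import Order.TTheory GRing.Theory Num.Theory.
Local Open Scope ring_scope.
Local Open Scope classical_set_scope.

Section Hex.
Variable R : realType.
Definition pt := (R * R)%type.

Definition padd (x y : pt) : pt := (x.1 + y.1, x.2 + y.2).
Definition psub (x y : pt) : pt := (x.1 - y.1, x.2 - y.2).
Definition pscale (t : R) (x : pt) : pt := (t * x.1, t * x.2).
Definition popp (x : pt) : pt := (- x.1, - x.2).

Definition u0 : pt := (1, 0).
Definition u1 : pt := (- (1 / 2), Num.sqrt 3 / 2).
Definition u2 : pt := popp (padd u0 u1).

Definition hex_vertex (i : 'I_6) : pt :=
  nth u0 [:: u0; popp u0; u1; popp u1; u2; popp u2] i.

Definition hexH : set pt :=
  [set v | exists c : 'I_6 -> R, (forall i, 0 <= c i) /\ \sum_(i < 6) c i = 1 /\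
      v = (\sum_(i < 6) c i * (hex_vertex i).1, \sum_(i < 6) c i * (hex_vertex i).2)].

Definition hexnorm (v : pt) : R :=
  inf [set t : R | 0 <= t /\ exists w, hexH w /\ v = pscale t w].

Definition hexdist (x y : pt) : R := hexnorm (psub x y).

Definition det2 (a b : pt) : R := a.1 * b.2 - a.2 * b.1.
Definition lam_area_span (a b : pt) : R := `| det2 a b |.

Definition Khex : R :=
  sup [set x : R | exists a b, hexnorm a <= 1 /\ hexnorm b <= 1 /\ x = lam_area_span a b].

Definition parallelogram (p a b : pt) : set pt :=
  [set padd p (padd (pscale s a) (pscale t b)) | s in `[0, 1]%classic & t in `[0,1]%classic].

Definition parea_pgram (p a b : pt) : R := Khex^-1 * lam_area_span a b.

Definition line (q a : pt) : set pt := [set padd q (pscale s a) | s in [set: R]].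

Definition set_hexdist (A B : set pt) : R :=
  inf [set d : R | exists x y, A x /\ B y /\ d = hexdist x y].

End Hex.

(* Main.v *)
Require Import Defs.
From mathcomp Require Import all_boot all_order all_algebra.
From mathcomp Require Import classical_sets reals.
From mathcomp Require Import ring lra.
Import Order.TTheory GRing.Theory Num.Theory.
Local Open Scope ring_scope.

Section S.
Variable R : realType.
Local Notation s := (Num.sqrt (3:R)).

Lemma s_gt0 : 0 < s. Proof. by rewrite sqrtr_gt0 ltr0n. Qed.
Lemma s_neq0 : s != 0. Proof. exact: lt0r_neq0 s_gt0. Qed.

Definition Xc (v : pt R) : R := v.1 + v.2 / s.
Definition Yc (v : pt R) : R := 2 * v.2 / s.
Definition N3 (x y : R) : R := Num.max `|x| (Num.max `|y| `|x - y|).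
Definition Nh v := N3 (Xc v) (Yc v).

Lemma N3_le (x y t : R) : (N3 x y <= t) = [&& `|x| <= t, `|y| <= t & `|x - y| <= t].
Proof. by rewrite /N3 !ge_max. Qed.

Lemma N3_ge (x y : R) : [/\ `|x| <= N3 x y, `|y| <= N3 x y & `|x - y| <= N3 x y].
Proof. by have := lexx (N3 x y); rewrite N3_le => /and3P. Qed.

Lemma N3_ge0 (x y : R) : 0 <= N3 x y.
Proof. by have [h _ _] := N3_ge x y; exact: le_trans (normr_ge0 _) h. Qed.

Lemma N3_cases (x y : R) : N3 x y = `|x| \/ N3 x y = `|y| \/ N3 x y = `|x - y|.
Proof. rewrite /N3; case: (leP `|y| `|x - y|) => _; [case: (leP `|x| `|x - y|)|case: (leP `|x| `|y|)] => _; tauto. Qed.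

Lemma N3_eq (x y z : R) : `|x| <= `|z| -> `|y| <= `|z| -> `|x - y| <= `|z| ->
  (`|z| = `|x| \/ `|z| = `|y| \/ `|z| = `|x - y|) -> N3 x y = `|z|.
Proof.
move=> h1 h2 h3 h4; apply: le_anti; rewrite N3_le h1 h2 h3 /=.
have [k1 k2 k3] := N3_ge x y.
by case: h4 => [->|[->|->]].
Qed.

Lemma N3_0l (z : R) : N3 0 z = `|z|.
Proof. by apply: N3_eq; rewrite ?normr0 ?sub0r ?normrN ?normr_ge0 //; tauto. Qed.
Lemma N3_0r (z : R) : N3 z 0 = `|z|.
Proof. by apply: N3_eq; rewrite ?normr0 ?subr0 ?normr_ge0 //; tauto. Qed.
Lemma N3_diag (z : R) : N3 z z = `|z|.
Proof. by apply: N3_eq; rewrite ?subrr ?normr0 ?normr_ge0 //; tauto. Qed.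

Lemma N3_scale (t x y : R) : N3 (t * x) (t * y) = `|t| * N3 x y.
Proof.
have [k1 k2 k3] := N3_ge x y.
have ht := normr_ge0 t.
have -> : `|t| * N3 x y = `| `|t| * N3 x y | by rewrite (ger0_norm (mulr_ge0 ht (N3_ge0 x y))).
apply: N3_eq; rewrite -?mulrBr !normrM ?normr_id ?(ger0_norm (N3_ge0 x y)).
- exact: ler_wpM2l.
- exact: ler_wpM2l.
- exact: ler_wpM2l.
- by case: (N3_cases x y) => [->|[->|->]]; tauto.
Qed.

Lemma bil (x y x' y' : R) :
  `|x * y' - y * x'| <= N3 x y * N3 x' y'.
Proof.
have [h1 h3 h5] := N3_ge x y; have [k1 k3 k5] := N3_ge x' y'.
move: (N3 x y) (N3 x' y') h1 h3 h5 k1 k3 k5 => n m.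
rewrite !ler_norml => /andP[h1 h2] /andP[h3 h4] /andP[h5 h6] /andP[k1 k2] /andP[k3 k4] /andP[k5 k6].
have [hx|hx] := lerP 0 x; have [hy|hy] := lerP 0 y; have [hxy|hxy] := lerP y x; nra.
Qed.

Lemma Xc_scale t v : Xc (pscale t v) = t * Xc v.
Proof. by rewrite /Xc /=; field; exact: s_neq0. Qed.
Lemma Yc_scale t v : Yc (pscale t v) = t * Yc v.
Proof. by rewrite /Yc /=; field; exact: s_neq0. Qed.
Lemma Nh_scale t v : Nh (pscale t v) = `|t| * Nh v.
Proof. by rewrite /Nh Xc_scale Yc_scale N3_scale. Qed.

Lemma hexH_N w : hexH w -> Nh w <= 1.
Proof.
move=> [c [c0 [c1 E]]]; move: c1 E; rewrite !big_ord_recl !big_ord0 /=.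
set a0 := c _. set a1 := c _. set a2 := c _. set a3 := c _. set a4 := c _. set a5 := c _.
move=> hs E.
have h0 : 0 <= a0 := c0 _. have h1 : 0 <= a1 := c0 _. have h2 : 0 <= a2 := c0 _.
have h3 : 0 <= a3 := c0 _. have h4 : 0 <= a4 := c0 _. have h5 : 0 <= a5 := c0 _.
have eX : Xc w = a0 - a1 - a4 + a5 by rewrite /Xc E /=; field; exact: s_neq0.
have eY : Yc w = a2 - a3 - a4 + a5 by rewrite /Yc E /=; field; exact: s_neq0.
rewrite /Nh eX eY N3_le; apply/and3P; split; rewrite ler_norml; apply/andP; split; lra.
Qed.

Lemma coeffs (X Y : R) : `|X| <= 1 -> `|Y| <= 1 -> `|X - Y| <= 1 ->
  exists k0 k1 k2 k3 k4 k5 : R,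
   [/\ 0 <= k0, 0 <= k1, 0 <= k2, 0 <= k3 & 0 <= k4] /\ 0 <= k5 /\
   k0 + (k1 + (k2 + (k3 + (k4 + (k5 + 0))))) = 1 /\
   k0 - k1 - k4 + k5 = X /\ k2 - k3 - k4 + k5 = Y.
Proof.
rewrite !ler_norml => /andP[h1 h2] /andP[h3 h4] /andP[h5 h6].
have [hx|hx] := lerP 0 X; have [hy|hy] := lerP 0 Y; have [hxy|hxy] := lerP Y X.
- exists (X - Y + (1 - X)/2), ((1 - X)/2), 0, 0, 0, Y; repeat split; lra.
- exists 0, 0, (Y - X + (1 - Y)/2), ((1 - Y)/2), 0, X; repeat split; lra.
- exists (X + (1 - X + Y)/2), ((1 - X + Y)/2), 0, (-Y), 0, 0; repeat split; lra.
- exfalso; lra.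
- exfalso; lra.
- exists 0, (-X), (Y + (1 + X - Y)/2), ((1 + X - Y)/2), 0, 0; repeat split; lra.
- exists 0, 0, ((1 + Y)/2), (X - Y + (1 + Y)/2), (-X), 0; repeat split; lra.
- exists ((1 + X)/2), (Y - X + (1 + X)/2), 0, 0, (-Y), 0; repeat split; lra.
Qed.

Lemma N_hexH w : Nh w <= 1 -> hexH w.
Proof.
rewrite /Nh N3_le => /and3P[h1 h2 h3].
have [k0 [k1 [k2 [k3 [k4 [k5 [[g0 g1 g2 g3 g4] [g5 [hs [hX hY]]]]]]]]]] := coeffs _ _ h1 h2 h3.
exists (fun i : 'I_6 => nth 0 [:: k0; k1; k2; k3; k4; k5] i).
split; first by case=> [[|[|[|[|[|[|i]]]]]] hi] //=.
rewrite !big_ord_recl !big_ord0 /=; split; first by [].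
move: hX hY; rewrite /Xc /Yc; clear h1 h2 h3; case: w => w1 w2 /= hX hY.
have e2 : w2 = (k2 - k3 - k4 + k5) * s / 2 by rewrite hY; field; exact: s_neq0.
have e1 : w1 = (k0 - k1 - k4 + k5) - (k2 - k3 - k4 + k5) / 2.
  by rewrite hX hY; field; exact: s_neq0.
by rewrite e1 e2; congr (_, _); field.
Qed.


Lemma inf_min (E : set R) m : E m -> (forall x, E x -> m <= x) -> inf E = m.
Proof.
move=> Em lb; apply: le_anti; apply/andP; split.
- by apply: (ge_inf _ Em); exists m.
- by apply: lb_le_inf; [exists m | ].
Qed.

Lemma sup_max (E : set R) m : E m -> (forall x, E x -> x <= m) -> sup E = m.
Proof.
move=> Em ub; apply: le_anti; apply/andP; split.
- by apply: ge_sup; [exists m | ].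
- by apply: (sup_upper_bound _ Em); split; [exists m | exists m].
Qed.

Lemma Nh0 v : Nh v = 0 -> v = (0, 0).
Proof.
move=> h; have [k1 k2 _] := N3_ge (Xc v) (Yc v).
move: k1 k2; rewrite -/(Nh v) h !normr_le0 /Xc /Yc => /eqP hx /eqP hy.
have e2 : v.2 = 0.
  have : 2 * v.2 / s * s / 2 = 0 by rewrite hy; ring.
  by move=> <-; field; exact: s_neq0.
clear h; case: v hx hy e2 => v1 v2 /= hx _ e2; move: hx; rewrite e2 mul0r addr0 => ->. done.
Qed.

Lemma Nh_u0 : Nh (u0 R) = 1.
Proof. by rewrite /Nh /Xc /Yc /= mul0r mulr0 mul0r addr0 N3_0r normr1. Qed.

Lemma Nh_u1 : Nh (u1 R) = 1.
Proof.
rewrite /Nh /Xc /Yc /=.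
have -> : - (1 / 2) + s / 2 / s = 0 by field; exact: s_neq0.
have -> : 2 * (s / 2) / s = 1 by field; exact: s_neq0.
by rewrite N3_0l normr1.
Qed.

Lemma hexnormE v : hexnorm v = Nh v.
Proof.
apply: inf_min.
- split; first exact: N3_ge0.
  have [h0|hn] := eqVneq (Nh v) 0.
  + exists (u0 R); split; first by apply: N_hexH; rewrite Nh_u0.
    by rewrite h0 (Nh0 _ h0) /pscale /= !mul0r.
  + exists (pscale (Nh v)^-1 v); split.
      apply: N_hexH; rewrite Nh_scale ger0_norm ?invr_ge0 ?N3_ge0 //.
      by rewrite mulVf.
    by case: v hn => v1 v2 hn; rewrite /pscale /=; congr (_, _); field.
- move=> t [t0 [w [/hexH_N hw ->]]].
  rewrite Nh_scale ger0_norm //.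
  by have := ler_wpM2l t0 hw; rewrite mulr1.
Qed.

Lemma detE (a b : pt R) : det2 a b = s / 2 * (Xc a * Yc b - Yc a * Xc b).
Proof. by rewrite /det2 /Xc /Yc; field; exact: s_neq0. Qed.

Lemma KhexE : Khex R = s / 2.
Proof.
have s0 : 0 <= s / 2 by rewrite divr_ge0 // ltW // s_gt0.
apply: sup_max.
- exists (u0 R), (u1 R); rewrite !hexnormE Nh_u0 Nh_u1; split => //; split => //.
  rewrite /lam_area_span /det2 /= mul0r subr0 mul1r ger0_norm //.
- move=> x [a [b [ha [hb ->]]]]; move: ha hb; rewrite !hexnormE => ha hb.
  rewrite /lam_area_span detE normrM (ger0_norm s0).
  have h := bil (Xc a) (Yc a) (Xc b) (Yc b).
  rewrite -[X in _ <= X]mulr1; apply: ler_wpM2l => //.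
  apply: (le_trans h).
  have := N3_ge0 (Xc a) (Yc a); have := N3_ge0 (Xc b) (Yc b).
  rewrite -/(Nh a) -/(Nh b) => g1 g2; nra.
Qed.


Lemma Xc_diff (p a b : pt R) r t :
  Xc (psub (padd p (pscale r a)) (padd (padd p b) (pscale t a))) = (r - t) * Xc a - Xc b.
Proof. by rewrite /Xc /=; field; exact: s_neq0. Qed.
Lemma Yc_diff (p a b : pt R) r t :
  Yc (psub (padd p (pscale r a)) (padd (padd p b) (pscale t a))) = (r - t) * Yc a - Yc b.
Proof. by rewrite /Yc /=; field; exact: s_neq0. Qed.

Lemma distE (p a b : pt R) : Nh a != 0 ->
  set_hexdist (line p a) (line (padd p b) a) = `|Xc a * Yc b - Yc a * Xc b| / Nh a.
Proof.
move=> na; have Na : 0 < Nh a by rewrite lt0r na N3_ge0.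
set D0 := Xc a * Yc b - Yc a * Xc b.
apply: inf_min.
- suff [r hr] : exists r : R, N3 (r * Xc a - Xc b) (r * Yc a - Yc b) = `|D0| / Nh a.
    exists (padd p (pscale r a)), (padd (padd p b) (pscale 0 a)); split; first by exists r.
    split; first by exists 0.
    by rewrite /hexdist hexnormE /Nh Xc_diff Yc_diff subr0.
  case: (N3_cases (Xc a) (Yc a)) => [h|[h|h]].
  + have xa : Xc a != 0 by move: na; rewrite /Nh h normr_eq0.
    exists (Xc b / Xc a).
    have -> : Xc b / Xc a * Xc a - Xc b = 0 by field.
    have -> : Xc b / Xc a * Yc a - Yc b = - (D0 / Xc a) by rewrite /D0; field.
    by rewrite N3_0l normrN normf_div /Nh h.
  + have ya : Yc a != 0 by move: na; rewrite /Nh h normr_eq0.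
    exists (Yc b / Yc a).
    have -> : Yc b / Yc a * Yc a - Yc b = 0 by field.
    have -> : Yc b / Yc a * Xc a - Xc b = D0 / Yc a by rewrite /D0; field.
    by rewrite N3_0r normf_div /Nh h.
  + have xya : Xc a - Yc a != 0 by move: na; rewrite /Nh h normr_eq0.
    exists ((Xc b - Yc b) / (Xc a - Yc a)).
    have -> : (Xc b - Yc b) / (Xc a - Yc a) * Xc a - Xc b = - (D0 / (Xc a - Yc a)).
      by rewrite /D0; field.
    have -> : (Xc b - Yc b) / (Xc a - Yc a) * Yc a - Yc b = - (D0 / (Xc a - Yc a)).
      by rewrite /D0; field.
    by rewrite N3_diag normrN normf_div /Nh h.
- move=> d [x [y [[r1 _ <-] [[r2 _ <-] ->]]]].
  rewrite /hexdist hexnormE /Nh Xc_diff Yc_diff ler_pdivrMr //.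
  have := bil ((r1 - r2) * Xc a - Xc b) ((r1 - r2) * Yc a - Yc b) (Xc a) (Yc a).
  have -> : ((r1 - r2) * Xc a - Xc b) * Yc a - ((r1 - r2) * Yc a - Yc b) * Xc a = D0.
    by rewrite /D0; ring.
  done.
Qed.

Lemma main (p a b : pt R) :
  det2 a b != 0 ->
  parea_pgram p a b =
    hexnorm a * set_hexdist (line p a) (line (padd p b) a).
Proof.
move=> hdet.
have hD : Xc a * Yc b - Yc a * Xc b != 0.
  by move: hdet; rewrite detE; apply: contra => /eqP ->; rewrite mulr0.
have na : Nh a != 0.
  apply: contra hD => /eqP h0; rewrite (Nh0 _ h0) /Xc /Yc /=; apply/eqP; ring.
rewrite /parea_pgram KhexE /lam_area_span distE // detE normrM hexnormE.
rewrite (ger0_norm (divr_ge0 (ltW s_gt0) (ler0n _ 2))).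
by field; rewrite na s_neq0.
Qed.

End S.

Theorem lemma2p5 (R : realType) (p a b : pt R) :
  det2 a b != 0 ->
  parea_pgram p a b =
    hexnorm a * set_hexdist (line p a) (line (padd p b) a).
Proof. exact: main. Qed.
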